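(* Let $(X,d)$ be a metric space and $\tilde x$ a sequence of points of $X$. The following are equivalent: (i) $\tilde x$ is $d$-statistically convergent; (ii) every subsequence $\tilde x'$ of $\tilde x$ with $\liminf_{n\to\infty}\frac{|K_{\tilde x'}(n)|}{n}>0$ is $d$-statistically convergent; (iii) every dense subsequence $\tilde x'$ of $\tilde x$ is $d$-statistically convergent.
   Context: A sequence $(z_k)$ in $(X,d)$ is $d$-statistically convergent to $a\in X$ if for every $\epsilon>0$, $\lim_{n\to\infty}\frac{1}{n}|\{k\le n: d(z_k,a)\ge\epsilon\}|=0$, and $d$-statistically convergent if this holds for some $a\in X$; a subsequence $(x_{n(k)})_k$ (with $(n(k))$ infinite and strictly increasing) is regarded as the sequence $k\mapsto x_{n(k)}$. For a subsequence $\tilde x'=(x_{n(k)})$, $K_{\tilde x'}=\{n(k):k\in\mathbb N\}$ and $K_{\tilde x'}(n)=\{m\in K_{\tilde x'}:m\le n\}$. A set $K\subseteq\mathbb N$ is statistical dense if $\lim_{n\to\infty}|\{k\in K:k\le n\}|/n=1$; $\tilde x'$ is a dense subsequence of $\tilde x$ if $K_{\tilde x'}$ is a statistical dense subset of $\mathbb N$. *)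

(* Defs.v *)
From Stdlib Require Import Reals.
From Coquelicot Require Import Coquelicot.
Open Scope R_scope.

Definition is_metric {X : Type} (d : X -> X -> R) : Prop :=
  (forall x y, 0 <= d x y) /\
  (forall x y, d x y = 0 <-> x = y) /\
  (forall x y, d x y = d y x) /\
  (forall x y z, d x z <= d x y + d y z).

Fixpoint count_lt (P : nat -> bool) (n : nat) : nat :=
  match n with
  | O => O
  | S m => (if P m then 1 else 0) + count_lt P m
  end%nat.

(* Sequences are indexed by nat = {0,1,2,...}; index k stands for the
   paper's index k+1, so {k <= n} in the paper is {k < n} here. *)

Definition bad_density {X : Type} (d : X -> X -> R) (z : nat -> X) (a : X)
  (eps : R) (n : nat) : R :=
  INR (count_lt (fun k => if Rle_dec eps (d (z k) a) then true else false) n)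
  / INR n.

Definition stat_conv_to {X : Type} (d : X -> X -> R) (z : nat -> X) (a : X) : Prop :=
  forall eps : R, 0 < eps -> is_lim_seq (bad_density d z a eps) 0.

Definition stat_conv {X : Type} (d : X -> X -> R) (z : nat -> X) : Prop :=
  exists a : X, stat_conv_to d z a.

(* A subsequence is given by a strictly increasing index map s. *)
Definition strictly_incr (s : nat -> nat) : Prop :=
  forall k, (s k < s (S k))%nat.

(* |K_{x'}(n)| = |{ s k : s k <= n }| (paper indexing), i.e. the number of
   k with s k < n here; since s is strictly increasing, s k >= k, so such k
   are all < n and are counted exactly once. *)
Definition K_count (s : nat -> nat) (n : nat) : nat :=
  count_lt (fun k => Nat.ltb (s k) n) n.

Definition K_ratio (s : nat -> nat) (n : nat) : R := INR (K_count s n) / INR n.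

Definition stat_dense_sub (s : nat -> nat) : Prop :=
  is_lim_seq (K_ratio s) 1.

(* Main.v *)
Require Import Defs.
From Stdlib Require Import Reals Lra Lia.
From Coquelicot Require Import Coquelicot.
Open Scope R_scope.

Lemma count_le_pred (P Q : nat -> bool) n :
  (forall k, P k = true -> Q k = true) -> (count_lt P n <= count_lt Q n)%nat.
Proof.
  intros H; induction n as [|n IH]; simpl; [lia|].
  destruct (P n) eqn:E; [rewrite (H _ E)|destruct (Q n)]; lia.
Qed.

Lemma count_S P n : (count_lt P n <= count_lt P (S n))%nat.
Proof. simpl; destruct (P n); lia. Qed.

Lemma count_mono P n m : (n <= m)%nat -> (count_lt P n <= count_lt P m)%nat.
Proof.
  induction 1; [lia|]. pose proof (count_S P m). lia.
Qed.

Lemma count_ltb m N : count_lt (fun k => Nat.ltb k m) N = Nat.min N m.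
Proof.
  induction N as [|N IH]; [reflexivity|].
  change (count_lt (fun k => Nat.ltb k m) (S N)) with
    ((if Nat.ltb N m then 1 else 0) + count_lt (fun k => Nat.ltb k m) N)%nat.
  rewrite IH. destruct (Nat.ltb N m) eqn:E.
  - apply Nat.ltb_lt in E. lia.
  - apply Nat.ltb_ge in E. lia.
Qed.

Lemma sincr_lt s : strictly_incr s -> forall i j, (i < j)%nat -> (s i < s j)%nat.
Proof.
  intros H i j Hij; induction Hij.
  - apply H.
  - specialize (H m). lia.
Qed.

Lemma sincr_ge s : strictly_incr s -> forall n, (n <= s n)%nat.
Proof.
  intros H n; induction n; [lia|]. specialize (H n). lia.
Qed.

Lemma count_sub P s : strictly_incr s -> forall n,
  (count_lt (fun k => P (s k)) (S n) <= count_lt P (S (s n)))%nat.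
Proof.
  intros Hs n; induction n as [|n IH].
  - simpl. destruct (P (s 0%nat)); lia.
  - change (count_lt (fun k => P (s k)) (S (S n))) with
      ((if P (s (S n)) then 1 else 0) + count_lt (fun k => P (s k)) (S n))%nat.
    change (count_lt P (S (s (S n)))) with
      ((if P (s (S n)) then 1 else 0) + count_lt P (s (S n)))%nat.
    pose proof (count_mono P (S (s n)) (s (S n)) (Hs n)). lia.
Qed.

Lemma Kcount_bound s : strictly_incr s -> forall n,
  (K_count s (S (s n)) <= S n)%nat.
Proof.
  intros Hs n. unfold K_count.
  eapply Nat.le_trans.
  - apply (count_le_pred _ (fun k => Nat.ltb k (S n))).
    intros k Hk. apply Nat.ltb_lt in Hk. apply Nat.ltb_lt.
    destruct (Nat.le_gt_cases k n) as [h|h]; [lia|].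
    pose proof (sincr_lt s Hs n k h). lia.
  - rewrite count_ltb. lia.
Qed.

Lemma count_nonneg_R P n : 0 <= INR (count_lt P n).
Proof. apply pos_INR. Qed.

Lemma main_dir (X : Type) (d : X -> X -> R) (x : nat -> X) (s : nat -> nat) :
  stat_conv d x -> strictly_incr s ->
  Rbar_lt (Finite 0) (LimInf_seq (K_ratio s)) ->
  stat_conv d (fun k => x (s k)).
Proof.
  intros [a Ha] Hs Hli.
  assert (Hc : exists c, 0 < c /\ exists N2, forall n, (N2 <= n)%nat -> c < K_ratio s n).
  { unfold LimInf_seq in Hli.
    destruct (ex_LimInf_seq (K_ratio s)) as [l0 HL]. simpl in Hli.
    destruct l0 as [l| |]; simpl in Hli.
    - assert (hl : 0 < l / 2) by lra.
      destruct (HL (mkposreal _ hl)) as [_ [N2 HN2]].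
      exists (l/2). split; [lra|]. exists N2. intros n Hn. specialize (HN2 n Hn).
      simpl in HN2. lra.
    - destruct (HL 1) as [N2 HN2]. exists 1. split; [lra|]. exists N2. exact HN2.
    - contradiction. }
  destruct Hc as [c [Hc0 [N2 HN2]]].
  exists a. intros eps Heps.
  apply is_lim_seq_spec. intros e.
  destruct e as [e He]. simpl.
  assert (Hec : 0 < e * c) by nra.
  pose proof (Ha eps Heps) as Hx. apply is_lim_seq_spec in Hx.
  destruct (Hx (mkposreal _ Hec)) as [N1 HN1]. simpl in HN1.
  exists (S (Nat.max N1 N2)). intros m Hm.
  destruct m as [|n]; [lia|].
  set (P := fun k => if Rle_dec eps (d (x k) a) then true else false).
  set (N := S (s n)).
  assert (HnN : (S n <= N)%nat) by (pose proof (sincr_ge s Hs n); unfold N; lia).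
  specialize (HN1 N ltac:(lia)). specialize (HN2 N ltac:(lia)).
  unfold bad_density in *.
  fold P in HN1.
  change (fun k : nat => if Rle_dec eps (d (x (s k)) a) then true else false)
    with (fun k => P (s k)).
  pose proof (count_sub P s Hs n) as C1. fold N in C1.
  pose proof (Kcount_bound s Hs n) as C2. fold N in C2.
  apply le_INR in C1. apply le_INR in C2.
  unfold K_ratio in HN2.
  assert (HN0 : 0 < INR N) by (unfold N; apply lt_0_INR; lia).
  assert (Hm0 : 0 < INR (S n)) by (apply lt_0_INR; lia).
  set (B := INR (count_lt P N)) in *.
  set (B' := INR (count_lt (fun k => P (s k)) (S n))) in *.
  set (K := INR (K_count s N)) in *.
  assert (HB0 : 0 <= B') by apply pos_INR.
  rewrite Rminus_0_r in HN1 |- *.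
  rewrite Rabs_pos_eq in HN1 by (apply Rdiv_le_0_compat; [apply pos_INR|lra]).
  rewrite Rabs_pos_eq by (apply Rdiv_le_0_compat; lra).
  apply Rmult_lt_compat_r with (r := INR N) in HN1; [|lra].
  apply Rmult_lt_compat_r with (r := INR N) in HN2; [|lra].
  unfold Rdiv in HN1, HN2.
  rewrite Rmult_assoc, Rinv_l in HN1 by lra.
  rewrite Rmult_assoc, Rinv_l in HN2 by lra.
  apply (Rmult_lt_reg_r (INR (S n))); [lra|].
  unfold Rdiv. rewrite Rmult_assoc, Rinv_l by lra.
  nra.
Qed.

Lemma Kcount_id n : K_count (fun k => k) n = n.
Proof. unfold K_count. rewrite count_ltb. lia. Qed.

Lemma id_incr : strictly_incr (fun k => k).
Proof. intro k; lia. Qed.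

Lemma id_dense : stat_dense_sub (fun k => k).
Proof.
  unfold stat_dense_sub.
  apply is_lim_seq_ext_loc with (u := fun _ => 1); [|apply is_lim_seq_const].
  exists 1%nat. intros n Hn. unfold K_ratio. rewrite Kcount_id.
  field. apply not_0_INR. lia.
Qed.

Lemma dense_liminf s : stat_dense_sub s -> Rbar_lt (Finite 0) (LimInf_seq (K_ratio s)).
Proof.
  intro H. rewrite (is_LimInf_seq_unique _ _ (is_lim_LimInf_seq _ _ H)).
  simpl; lra.
Qed.

Theorem theorem5 (X : Type) (d : X -> X -> R) (Hd : is_metric d) (x : nat -> X) :
  (stat_conv d x <->
     (forall s : nat -> nat, strictly_incr s ->
        Rbar_lt (Finite 0) (LimInf_seq (K_ratio s)) ->
        stat_conv d (fun k => x (s k))))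
  /\
  (stat_conv d x <->
     (forall s : nat -> nat, strictly_incr s -> stat_dense_sub s ->
        stat_conv d (fun k => x (s k)))).
Proof.
  split; split.
  - intros H s Hs Hl. exact (main_dir X d x s H Hs Hl).
  - intros H. apply (H (fun k => k) id_incr (dense_liminf _ id_dense)).
  - intros H s Hs Hl. exact (main_dir X d x s H Hs (dense_liminf _ Hl)).
  - intros H. apply (H (fun k => k) id_incr id_dense).
Qed.
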